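(* For every $\lambda>0$ there exists $\delta_1=\delta_1(\lambda)>0$ such that for all $r>0$ and all $x,y\in\mathbb{R}^d$ with $r\leq\|x-y\|\leq\lambda r$, there is a point $z\in\operatorname{conv}(\{x,y\})$ such that $B(z,\delta_1 r)\subseteq W(x,y,r)$.
   Context: $B(x,r)=\{y\in\mathbb{R}^d:\|x-y\|<r\}$ is the open Euclidean ball. For $x,y\in\mathbb{R}^d$ and $r>0$, $W(x,y,r):=\{z\in B(y,\|y-x\|): B(z,r)\supseteq B(x,r)\cap B(y,\|y-x\|)\}$. $\operatorname{conv}$ denotes convex hull. *)

(* Defs.v *)
From mathcomp Require Import all_boot all_order all_algebra.
From mathcomp Require Import boolp classical_sets reals.
Set Implicit Arguments. Unset Strict Implicit. Unset Printing Implicit Defensive.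
Import Order.TTheory GRing.Theory Num.Theory.
Local Open Scope ring_scope.
Local Open Scope classical_set_scope.

Definition enorm (R : realType) (d : nat) (x : 'rV[R]_d) : R :=
  Num.sqrt (\sum_(i < d) x ord0 i ^+ 2).

Definition eball (R : realType) (d : nat) (x : 'rV[R]_d) (r : R) : set 'rV[R]_d :=
  [set y | enorm (x - y) < r].

Definition Wset (R : realType) (d : nat) (x y : 'rV[R]_d) (r : R) : set 'rV[R]_d :=
  [set z | eball y (enorm (y - x)) z /\
           (eball x r `&` eball y (enorm (y - x))) `<=` eball z r].

Definition conv2 (R : realType) (d : nat) (x y : 'rV[R]_d) : set 'rV[R]_d :=
  [set z | exists t : R, 0 <= t <= 1 /\ z = (1 - t) *: x + t *: y].

(* Main.v *)
Require Import Defs.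
From mathcomp Require Import all_boot all_order all_algebra.
From mathcomp Require Import boolp classical_sets reals.
From mathcomp Require Import ring lra.
Import Order.TTheory GRing.Theory Num.Theory.
Local Open Scope ring_scope.
Local Open Scope classical_set_scope.

Definition dot {R : realType} {d : nat} (u v : 'rV[R]_d) : R :=
  \sum_(i < d) u ord0 i * v ord0 i.

Lemma enormE {R : realType} {d : nat} (u : 'rV[R]_d) : enorm u = Num.sqrt (dot u u).
Proof. by rewrite /enorm /dot; congr Num.sqrt; apply eq_bigr => i _; rewrite expr2. Qed.

Lemma dot_ge0 {R : realType} {d : nat} (u : 'rV[R]_d) : 0 <= dot u u.
Proof. by apply: sumr_ge0 => i _; rewrite -expr2 sqr_ge0. Qed.

Lemma dot3 {R : realType} {d : nat} (a b c : R) (u v w : 'rV[R]_d) :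
  dot (a *: u + b *: v + c *: w) (a *: u + b *: v + c *: w) =
  a^2 * dot u u + b^2 * dot v v + c^2 * dot w w + 2*a*b*dot u v
  + 2*a*c*dot u w + 2*b*c*dot v w.
Proof.
rewrite /dot !mulr_sumr -!big_split /=; apply eq_bigr => i _; rewrite !mxE; ring.
Qed.

Lemma amgm {R : realType} {d : nat} (a b : R) (u w : 'rV[R]_d) :
  0 <= a -> 0 <= b -> 2 * a * b * `|dot u w| <= a^2 * dot u u + b^2 * dot w w.
Proof.
move=> a0 b0.
have h1 := dot_ge0 (a *: u + (-b) *: w + 0 *: w); rewrite dot3 in h1.
have h2 := dot_ge0 (a *: u + b *: w + 0 *: w); rewrite dot3 in h2.
have [h|h] := lerP 0 (dot u w).
  rewrite ger0_norm //; nra.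
rewrite ltr0_norm //; nra.
Qed.

Lemma sq_of_le {R : realType} {d : nat} (u : 'rV[R]_d) (s : R) :
  0 <= s -> s <= enorm u -> s^2 <= dot u u.
Proof.
rewrite enormE => s0 h.
have q0 := sqrtr_ge0 (dot u u); have qs := sqr_sqrtr (dot_ge0 u); nra.
Qed.

Lemma sq_of_ge {R : realType} {d : nat} (u : 'rV[R]_d) (s : R) :
  enorm u <= s -> dot u u <= s^2.
Proof.
rewrite enormE => h.
have q0 := sqrtr_ge0 (dot u u); have qs := sqr_sqrtr (dot_ge0 u); nra.
Qed.

Lemma sq_of_lt {R : realType} {d : nat} (u : 'rV[R]_d) (s : R) :
  enorm u < s -> dot u u < s^2.
Proof.
rewrite enormE => h.
have q0 := sqrtr_ge0 (dot u u); have qs := sqr_sqrtr (dot_ge0 u); nra.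
Qed.

Lemma lt_of_sq {R : realType} {d : nat} (u : 'rV[R]_d) (s : R) :
  0 < s -> dot u u < s^2 -> enorm u < s.
Proof.
rewrite enormE => s0 h.
have q0 := sqrtr_ge0 (dot u u); have qs := sqr_sqrtr (dot_ge0 u).
rewrite ltNge; apply/negP => hc; nra.
Qed.

Lemma lt_enorm {R : realType} {d : nat} (u v : 'rV[R]_d) :
  dot u u < dot v v -> enorm u < enorm v.
Proof.
rewrite !enormE => h.
have q0 := sqrtr_ge0 (dot u u); have qs := sqr_sqrtr (dot_ge0 u).
have p0 := sqrtr_ge0 (dot v v); have ps := sqr_sqrtr (dot_ge0 v).
rewrite ltNge; apply/negP => hc; nra.
Qed.

Lemma enorm_lt {R : realType} {d : nat} (u v : 'rV[R]_d) :
  enorm u < enorm v -> dot u u < dot v v.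
Proof.
rewrite !enormE => h.
have q0 := sqrtr_ge0 (dot u u); have qs := sqr_sqrtr (dot_ge0 u).
have p0 := sqrtr_ge0 (dot v v); have ps := sqr_sqrtr (dot_ge0 v).
nra.
Qed.

Theorem lemma3p2 (R : realType) (d : nat) (lambda : R) :
  0 < lambda ->
  exists delta1 : R, 0 < delta1 /\
    forall (r : R) (x y : 'rV[R]_d), 0 < r ->
      r <= enorm (x - y) <= lambda * r ->
      exists z : 'rV[R]_d, conv2 x y z /\ eball z (delta1 * r) `<=` Wset x y r.
Proof.
move=> l0.
pose t : R := (2 * (lambda ^ 2 + 1))^-1.
pose dl : R := t / (2 * (3 + 2 * lambda)).
have tE : t * (2 * (lambda ^ 2 + 1)) = 1 by rewrite /t mulVf //; nra.
have t0 : 0 < t by rewrite /t invr_gt0; nra.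
have dE : dl * (2 * (3 + 2 * lambda)) = t by rewrite /dl mulfVK //; nra.
have d0 : 0 < dl by rewrite /dl divr_gt0 //; nra.
have t12 : t <= 1/2 by nra.
have tl : t * lambda ^ 2 <= 1/2 by nra.
have d1 : dl <= 1 by nra.
exists dl; split => // r x y r0 /andP[Hr1 Hr2].
have hxy : x - y = (-1) *: (y - x) + 0 *: (y - x) + 0 *: (y - x).
  by apply/rowP => i; rewrite !mxE; ring.
have V1 := sq_of_le _ _ (ltW r0) Hr1; have V2 := sq_of_ge _ _ Hr2.
rewrite hxy dot3 in V1 V2.
set V := dot (y - x) (y - x) in V1 V2.
have V1' : r ^ 2 <= V by lra.
have V2' : V <= lambda ^ 2 * r ^ 2 by lra.
exists ((1 - t) *: x + t *: y); split.
  by exists t; split => //; apply/andP; split; lra.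
move=> w /= Hw.
have E1 := sq_of_lt _ _ Hw.
set E := dot _ _ in E1.
have hVE := amgm _ _ (y - x) ((1 - t) *: x + t *: y - w) (ltW d0) (ltW l0).
rewrite -/E -/V in hVE.
set VE := dot (y - x) _ in hVE.
have VEb : `|VE| <= dl * lambda * r ^ 2.
  have : dl * lambda * `|VE| <= dl * lambda * (dl * lambda * r ^ 2) by nra.
  by rewrite ler_pM2l //; nra.
have VEn := normr_ge0 VE.
have VEl := ler_norm VE.
have VEl' : - VE <= `|VE| by rewrite -normrN ler_norm.
split.
  apply: lt_enorm.
  have -> : y - w = (1 - t) *: (y - x) + 1 *: ((1 - t) *: x + t *: y - w) + 0 *: (y - x).
    by apply/rowP => i; rewrite !mxE; ring.
  rewrite dot3 -/V -/E -/VE.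
  have h1 : (1 - t) * VE <= dl * lambda * r ^ 2 by nra.
  have h2a : 0 <= (t - t ^ 2) * V by apply: mulr_ge0; nra.
  have h2b : 0 <= t * (V - r ^ 2) by apply: mulr_ge0; lra.
  have h2 : t * r ^ 2 <= (2 * t - t ^ 2) * V by nra.
  have h3 : dl * dl * r ^ 2 <= dl * r ^ 2 by nra.
  have h4 : dl * (3 + 2 * lambda) * r ^ 2 = t / 2 * r ^ 2 by nra.
  have r2 : 0 < r ^ 2 by nra.
  nra.
move=> p [/= Hp1 Hp2].
have A1 := sq_of_lt _ _ Hp1.
have Hp2' := enorm_lt _ _ Hp2.
have ex1 : x - p = (-1) *: (p - x) + 0 *: (p - x) + 0 *: (p - x).
  by apply/rowP => i; rewrite !mxE; ring.
have ex2 : y - p = 1 *: (y - x) + (-1) *: (p - x) + 0 *: (p - x).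
  by apply/rowP => i; rewrite !mxE; ring.
rewrite ex1 in A1; rewrite ex2 in Hp2'.
rewrite !dot3 -/V in A1 Hp2'.
set A := dot (p - x) (p - x) in A1 Hp2'.
set VA := dot (y - x) (p - x) in Hp2'.
have hEA := amgm _ _ ((1 - t) *: x + t *: y - w) (p - x) ler01 (ltW d0).
rewrite -/E -/A in hEA.
set EA := dot _ (p - x) in hEA.
have EAb : `|EA| <= dl * r ^ 2.
  have : dl * `|EA| <= dl * (dl * r ^ 2) by nra.
  by rewrite ler_pM2l.
have EAl := ler_norm EA.
have EAl' : - EA <= `|EA| by rewrite -normrN ler_norm.
have wp : w - p = t *: (y - x) + (-1) *: ((1 - t) *: x + t *: y - w) + (-1) *: (p - x).
  by apply/rowP => i; rewrite !mxE; ring.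
apply: lt_of_sq => //; rewrite wp dot3 -/V -/E -/A -/VE -/VA -/EA.
have A0 : 0 <= A := dot_ge0 _.
have r2 : 0 < r ^ 2 by nra.
have g1a : t ^ 2 * V <= t ^ 2 * (lambda ^ 2 * r ^ 2) by apply: ler_wpM2l; nra.
have g1 : t ^ 2 * V <= t / 2 * r ^ 2 by nra.
have g2 : 0 <= t * (2 * VA - A) by apply: mulr_ge0; lra.
have g3 : 0 <= (1 - t) * (r ^ 2 - A) by apply: mulr_ge0; lra.
have g4 : - (t * VE) <= dl * lambda * r ^ 2 by nra.
have g6 : E < dl * r ^ 2 by nra.
have h4 : dl * (3 + 2 * lambda) * r ^ 2 = t / 2 * r ^ 2 by nra.
nra.
Qed.
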